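(* Let $\rho\ge 0$ and consider the two-dimensional Poisson regression model with interaction at $\boldsymbol{\beta}=(0,-1,-1,-\rho)^\top$ on $\mathcal{X}=[0,\infty)^2$. Let $\xi$ be a design on $\mathcal{X}$ with nonsingular information matrix that is invariant under the permutation $(x_1,x_2)\mapsto(x_2,x_1)$ of the coordinates. Then the deduced sensitivity function $d(\mathbf{x};\xi)$ attains its maximum over $\mathcal{X}$ on the boundary of $\mathcal{X}$ (points with $x_1=0$ or $x_2=0$) or on the diagonal of $\mathcal{X}$ (points with $x_1=x_2$); that is, $\sup_{\mathbf{x}\in\mathcal{X}} d(\mathbf{x};\xi)=\sup\{d(\mathbf{x};\xi): \mathbf{x}\in\mathcal{X},\ x_1=0\text{ or }x_2=0\text{ or }x_1=x_2\}$.
   Context: In the model, an observation at setting $\mathbf{x}=(x_1,x_2)$ is Poisson distributed with mean $\lambda(\mathbf{x})=\exp(\mathbf{f}(\mathbf{x})^\top\boldsymbol{\beta})$, where $\mathbf{f}(\mathbf{x})=(1,x_1,x_2,x_1x_2)^\top$; with $\boldsymbol{\beta}=(0,-1,-1,-\rho)^\top$ this is $\lambda(\mathbf{x})=\exp(-x_1-x_2-\rho x_1x_2)$. A design $\xi$ is a finite collection of distinct settings $\mathbf{x}_i\in\mathcal{X}$ with weights $w_i\ge0$ summing to $1$; its information matrix is $\mathbf{M}(\xi)=\sum_i w_i\lambda(\mathbf{x}_i)\mathbf{f}(\mathbf{x}_i)\mathbf{f}(\mathbf{x}_i)^\top$. The design is invariant under permutation if the setting $(x_2,x_1)$ carries the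 same weight as $(x_1,x_2)$ for every setting. The deduced sensitivity function is $d(\mathbf{x};\xi)=\mathbf{f}(\mathbf{x})^\top\mathbf{M}(\xi)^{-1}\mathbf{f}(\mathbf{x})/p-1/\lambda(\mathbf{x})$ with $p=4$. *)

(* Defs.v *)
From mathcomp Require Import all_boot all_order all_algebra.
From mathcomp Require Import all_classical all_reals all_analysis.
Set Implicit Arguments. Unset Strict Implicit. Unset Printing Implicit Defensive.
Import Order.TTheory GRing.Theory Num.Theory.
Local Open Scope ring_scope.
Local Open Scope classical_set_scope.

Section PoissonDesign.
Variable R : realType.

Definition fvec (x : R * R) : 'cV[R]_4 :=
  \col_(i < 4) [:: 1; x.1; x.2; x.1 * x.2]`_i.

(* intensity lambda(x) = exp(f(x)^T beta), beta = (0,-1,-1,-rho) *)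
Definition lam (rho : R) (x : R * R) : R :=
  expR (- x.1 - x.2 - rho * (x.1 * x.2)).

Definition Xset : set (R * R) := [set x | 0 <= x.1 /\ 0 <= x.2].

Definition is_design (n : nat) (pts : 'I_n -> R * R) (w : 'I_n -> R) : Prop :=
  injective pts /\ (forall i, Xset (pts i)) /\ (forall i, 0 <= w i) /\
  \sum_(i < n) w i = 1.

Definition weight_at (n : nat) (pts : 'I_n -> R * R) (w : 'I_n -> R)
  (y : R * R) : R := \sum_(i < n | pts i == y) w i.

Definition swap_pt (x : R * R) : R * R := (x.2, x.1).

Definition perm_invariant (n : nat) (pts : 'I_n -> R * R) (w : 'I_n -> R) :
  Prop := forall i, weight_at pts w (swap_pt (pts i)) = w i.

Definition infoM (rho : R) (n : nat) (pts : 'I_n -> R * R) (w : 'I_n -> R)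
  : 'M[R]_4 :=
  \sum_(i < n) ((w i * lam rho (pts i)) *: (fvec (pts i) *m (fvec (pts i))^T)).

(* deduced sensitivity function, p = 4 *)
Definition sens (rho : R) (n : nat) (pts : 'I_n -> R * R) (w : 'I_n -> R)
  (x : R * R) : R :=
  ((fvec x)^T *m invmx (infoM rho pts w) *m fvec x) 0 0 / 4%:R
  - (lam rho x)^-1.

End PoissonDesign.

(* Main.v *)
Require Import Defs.
From mathcomp Require Import all_boot all_order all_algebra.
From mathcomp Require Import all_classical all_reals all_analysis.
From mathcomp Require Import fingroup perm.
From mathcomp Require Import ring lra.
Import Order.TTheory GRing.Theory Num.Theory.
Local Open Scope ring_scope.
Local Open Scope classical_set_scope.

Section Core.
Variable R : realType.
Definition o0 : 'I_4 := @Ordinal 4 0 isT.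
Definition o1 : 'I_4 := @Ordinal 4 1 isT.
Definition o2 : 'I_4 := @Ordinal 4 2 isT.
Definition o3 : 'I_4 := @Ordinal 4 3 isT.

Definition bq (a : 'I_4 -> 'I_4 -> R) (y0 y1 y2 y3 z0 z1 z2 z3 : R) : R :=
  y0 * (a o0 o0 * z0 + a o0 o1 * z1 + a o0 o2 * z2 + a o0 o3 * z3) +
  y1 * (a o1 o0 * z0 + a o1 o1 * z1 + a o1 o2 * z2 + a o1 o3 * z3) +
  y2 * (a o2 o0 * z0 + a o2 o1 * z1 + a o2 o2 * z2 + a o2 o3 * z3) +
  y3 * (a o3 o0 * z0 + a o3 o1 * z1 + a o3 o2 * z2 + a o3 o3 * z3).

Definition Kf a (s t : R) : R :=
  bq a 1 (s/2) (s/2) t 1 (s/2) (s/2) t +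
  bq a 0 1 (-1) 0 0 1 (-1) 0 * (s^+2/4 - t).

Lemma core (a : 'I_4 -> 'I_4 -> R) (rho x1 x2 u : R) :
  a o0 o2 = a o0 o1 -> a o2 o0 = a o1 o0 -> a o2 o2 = a o1 o1 ->
  a o2 o1 = a o1 o2 -> a o2 o3 = a o1 o3 -> a o3 o2 = a o3 o1 ->
  (forall y0 y1 y2 y3, 0 <= bq a y0 y1 y2 y3 y0 y1 y2 y3) ->
  0 <= rho -> 0 <= x1 -> 0 <= x2 -> 0 <= u ->
  2 * u + rho * u ^+ 2 = x1 + x2 + rho * (x1 * x2) ->
  bq a 1 x1 x2 (x1 * x2) 1 x1 x2 (x1 * x2) <=
  Num.max (bq a 1 (x1 + x2 + rho * (x1 * x2)) 0 ((x1 + x2 + rho * (x1 * x2)) * 0)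
               1 (x1 + x2 + rho * (x1 * x2)) 0 ((x1 + x2 + rho * (x1 * x2)) * 0))
          (bq a 1 u u (u * u) 1 u u (u * u)).
Proof.
move=> e1 e2 e3 e4 e5 e6 psd hr h1 h2 hu hE.
set E := x1 + x2 + rho * (x1 * x2).
have HQ : forall y1 y2, bq a 1 y1 y2 (y1 * y2) 1 y1 y2 (y1 * y2) = Kf a (y1 + y2) (y1 * y2).
  move=> y1 y2; rewrite /Kf /bq e1 e2 e3 e4 e5 e6; by field.
pose K t := Kf a (E - rho * t) t.
pose c := bq a 0 1 (-1) 0 0 1 (-1) 0.
pose al := bq a 0 (- rho / 2) (- rho / 2) 1 0 (- rho / 2) (- rho / 2) 1 + c * rho ^+ 2 / 4.
have Hid : forall t0 T, T * K t0 - (T - t0) * K 0 - t0 * K T = al * T * t0 * (t0 - T).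
  move=> t0 T; rewrite /K /al /c /Kf /bq; by field.
have Hal : 0 <= al.
  rewrite /al; apply: addr_ge0; first exact: psd.
  apply: mulr_ge0; last by [].
  by apply: mulr_ge0; [exact: psd | exact: sqr_ge0].
have E1 : bq a 1 x1 x2 (x1 * x2) 1 x1 x2 (x1 * x2) = K (x1 * x2).
  by rewrite HQ /K /E; congr Kf; ring.
have E2 : bq a 1 u u (u * u) 1 u u (u * u) = K (u ^+ 2).
  by rewrite HQ /K /E -hE; congr Kf; ring.
have E0 : bq a 1 E 0 (E * 0) 1 E 0 (E * 0) = K 0.
  by rewrite HQ /K; congr Kf; ring.
rewrite E0 E1 E2.
have Ht : x1 * x2 <= u ^+ 2.
  rewrite leNgt; apply/negP => Hlt.
  have Hs : 2 * u < x1 + x2.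
    rewrite ltNge; apply/negP => Hle.
    have : (x1 + x2) ^+ 2 <= (2 * u) ^+ 2.
      by rewrite ler_pXn2r // ?nnegrE; lra.
    have : 0 <= (x1 - x2) ^+ 2 by exact: sqr_ge0.
    rewrite !expr2 in Hlt *; lra.
  have : rho * (u ^+ 2) <= rho * (x1 * x2) by apply: ler_wpM2l => //; exact: ltW.
  lra.
have Ht0 : 0 <= x1 * x2 by exact: mulr_ge0.
have Hu2 : 0 <= u ^+ 2 by exact: sqr_ge0.
set t0 := x1 * x2 in Ht Ht0 E1 *.
set T := u ^+ 2 in Ht Hu2 E2 *.
have [T0|TP] := eqVneq T 0.
  have -> : t0 = 0 by apply/eqP; rewrite eq_le Ht0 andbT -T0.
  by rewrite le_max lexx.
have TP' : 0 < T by rewrite lt_neqAle eq_sym TP.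
have H1 : T * K t0 <= (T - t0) * K 0 + t0 * K T.
  have := Hid t0 T.
  have : al * T * t0 * (t0 - T) <= 0.
    apply: mulr_ge0_le0; last by rewrite subr_le0.
    by apply: mulr_ge0 => //; apply: mulr_ge0 => //; exact: ltW.
  lra.
set m := Num.max (K 0) (K T).
have Hm0 : K 0 <= m by rewrite le_max lexx.
have HmT : K T <= m by rewrite le_max lexx orbT.
have : (T - t0) * K 0 + t0 * K T <= T * m.
  have : (T - t0) * K 0 <= (T - t0) * m by apply: ler_wpM2l; rewrite ?subr_ge0.
  have : t0 * K T <= t0 * m by apply: ler_wpM2l.
  lra.
move=> H2.
rewrite -(ler_pM2l TP'); lra.
Qed.

Lemma sum4 (F : 'I_4 -> R) : \sum_(i < 4) F i = F o0 + F o1 + F o2 + F o3.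
Proof.
rewrite !big_ord_recl big_ord0 addr0 !addrA.
by congr (_ + _ + _ + _); congr F; apply: val_inj.
Qed.

Lemma bq_mx (A : 'M[R]_4) (y z : 'cV[R]_4) :
  (y^T *m A *m z) 0 0 = bq (fun i j => A i j) (y o0 0) (y o1 0) (y o2 0) (y o3 0)
     (z o0 0) (z o1 0) (z o2 0) (z o3 0).
Proof.
rewrite mxE sum4 !mxE !sum4 !mxE /bq; ring.
Qed.

Lemma fvecE (x : R * R) :
  [/\ fvec x o0 0 = 1, fvec x o1 0 = x.1, fvec x o2 0 = x.2 & fvec x o3 0 = x.1 * x.2].
Proof. by rewrite !mxE. Qed.

Lemma QE (A : 'M[R]_4) (x : R * R) :
  ((fvec x)^T *m A *m fvec x) 0 0 =
  bq (fun i j => A i j) 1 x.1 x.2 (x.1 * x.2) 1 x.1 x.2 (x.1 * x.2).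
Proof. by rewrite bq_mx; case: (fvecE x) => -> -> -> ->. Qed.
End Core.
Arguments bq {R}.
Arguments Kf {R}.
Arguments core {R}.
Arguments QE {R}.
Section Design.
Variable R : realType.
Variables (rho : R) (n : nat) (pts : 'I_n -> R * R) (w : 'I_n -> R).
Hypothesis Hd : is_design pts w.
Hypothesis Hinv : perm_invariant pts w.

Lemma swapK (y : R * R) : swap_pt (swap_pt y) = y.
Proof. by case: y. Qed.

Lemma weight_self j : weight_at pts w (pts j) = w j.
Proof.
case: Hd => inj _.
rewrite /weight_at (eq_bigl (fun l => l == j)) ?big_pred1_eq // => l.
exact: inj_eq.
Qed.

Lemma reindex (G : R * R -> R) :
  \sum_(k < n) w k * G (swap_pt (pts k)) = \sum_(k < n) w k * G (pts k).
Proof.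
have wsw k j : pts j = swap_pt (pts k) -> w j = w k.
  by move=> Hj; rewrite -(Hinv k) -Hj weight_self.
have cnt j : \sum_(k < n) (pts j == swap_pt (pts k))%:R * w j = w j.
  rewrite -{2}(Hinv j) /weight_at [RHS]big_mkcond /=; apply: eq_bigr => k _.
  have -> : (pts j == swap_pt (pts k)) = (pts k == swap_pt (pts j)).
    apply/eqP/eqP => H; first by rewrite H swapK.
    by rewrite H swapK.
  case: eqP => [Hk|_]; last by rewrite mul0r.
  rewrite mul1r; apply: wsw.
  by rewrite Hk swapK.
transitivity (\sum_(k < n) \sum_(j < n)
   ((pts j == swap_pt (pts k))%:R * w j * G (pts j))).
  apply: eq_bigr => k _.
  rewrite -{1}(Hinv k) /weight_at big_distrl /= big_mkcond /=.
  apply: eq_bigr => j _.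
  case: eqP => [Hj|_]; first by rewrite Hj mul1r.
  by rewrite !mul0r.
rewrite exchange_big /=; apply: eq_bigr => j _.
by rewrite -big_distrl /= cnt.
Qed.

Lemma infoME i j : infoM rho pts w i j =
  \sum_(k < n) w k * (lam rho (pts k) * (fvec (pts k) i 0 * fvec (pts k) j 0)).
Proof.
rewrite /infoM summxE; apply: eq_bigr => k _.
by rewrite mxE mxE big_ord1 !mxE -mulrA.
Qed.

Lemma lam_swap (y : R * R) : lam rho (swap_pt y) = lam rho y.
Proof. by rewrite /lam /=; congr expR; ring. Qed.

Definition sg : 'S_4 := tperm o1 o2.

Lemma ord4 (i : 'I_4) : [\/ i = o0, i = o1, i = o2 | i = o3].
Proof.
case: i => [[|[|[|[|k]]]] Hi].
- by apply: Or41; apply: val_inj.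
- by apply: Or42; apply: val_inj.
- by apply: Or43; apply: val_inj.
- by apply: Or44; apply: val_inj.
- by [].
Qed.

Lemma fvec_sg (y : R * R) i : fvec y (sg i) 0 = fvec (swap_pt y) i 0.
Proof.
rewrite /sg; case: (ord4 i) => ->.
- by rewrite tpermD // !mxE.
- by rewrite tpermL !mxE.
- by rewrite tpermR !mxE.
- by rewrite tpermD // !mxE /= mulrC.
Qed.

Lemma infoM_inv i j : infoM rho pts w (sg i) (sg j) = infoM rho pts w i j.
Proof.
rewrite !infoME -(reindex (fun y => lam rho y * (fvec y i 0 * fvec y j 0))).
apply: eq_bigr => k _.
by rewrite !fvec_sg lam_swap.
Qed.

Lemma infoM_psd (v : 'cV[R]_4) : 0 <= (v^T *m infoM rho pts w *m v) 0 0.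
Proof.
rewrite /infoM mulmx_sumr mulmx_suml summxE.
apply: sumr_ge0 => k _.
rewrite -scalemxAr -scalemxAl mxE mulmxA -(mulmxA _ _ v).
have -> : v^T *m fvec (pts k) = ((fvec (pts k))^T *m v)^T by rewrite trmx_mul trmxK.
apply: mulr_ge0.
  case: Hd => _ [_ [Hw _]].
  by apply: mulr_ge0 => //; exact: ltW (expR_gt0 _).
rewrite mxE big_ord1 mxE -expr2; exact: sqr_ge0.
Qed.
End Design.

Section Inv.
Variable R : realType.

Lemma invmx_inv (M : 'M[R]_4) : M \in unitmx ->
  (forall i j, M (sg i) (sg j) = M i j) ->
  forall i j, invmx M (sg i) (sg j) = invmx M i j.
Proof.
move=> Mu HM.
set P : 'M[R]_4 := perm_mx sg; set Q : 'M[R]_4 := perm_mx sg^-1.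
have PQ : P *m Q = 1%:M by rewrite -perm_mxM mulgV perm_mx1.
have QP : Q *m P = 1%:M by rewrite -perm_mxM mulVg perm_mx1.
have hM : P *m M *m Q = M.
  rewrite -row_permE -col_permE; apply/matrixP => i j; rewrite !mxE; exact: HM.
have hA : P *m invmx M *m Q = invmx M.
  transitivity (P *m invmx M *m Q *m (P *m M *m Q *m invmx M)).
    by rewrite hM mulmxV // mulmx1.
  rewrite -!mulmxA (mulmxA Q P) QP mul1mx (mulmxA (invmx M) M) mulVmx // mul1mx.
  by rewrite mulmxA PQ mul1mx.
move=> i j; move/matrixP: hA => /(_ i j).
by rewrite -row_permE -col_permE !mxE.
Qed.

Lemma invmx_psd (M : 'M[R]_4) : M \in unitmx ->
  (forall v : 'cV[R]_4, 0 <= (v^T *m M *m v) 0 0) ->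
  forall z : 'cV[R]_4, 0 <= (z^T *m invmx M *m z) 0 0.
Proof.
move=> Mu HM z.
have -> : (z^T *m invmx M *m z) 0 0 = ((z^T *m invmx M *m z)^T) 0 0 by rewrite [RHS]mxE.
rewrite !trmx_mul trmxK.
have -> : z^T *m ((invmx M)^T *m z) = (invmx M *m z)^T *m M *m (invmx M *m z).
  by rewrite trmx_mul -!mulmxA (mulmxA M) mulmxV // mul1mx.
exact: HM.
Qed.

Lemma sgE : [/\ sg o0 = o0, sg o1 = o2, sg o2 = o1 & sg o3 = o3].
Proof. by rewrite /sg tpermL tpermR !tpermD. Qed.

End Inv.
Arguments invmx_inv {R}.
Arguments invmx_psd {R}.

Theorem lemma2 (R : realType) (rho : R) (n : nat)
  (pts : 'I_n -> R * R) (w : 'I_n -> R) :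
  0 <= rho ->
  is_design pts w ->
  perm_invariant pts w ->
  infoM rho pts w \in unitmx ->
  ereal_sup [set (sens rho pts w x)%:E | x in Xset (R:=R)] =
  ereal_sup [set (sens rho pts w x)%:E | x in
     [set x : R * R | Xset x /\ (x.1 = 0 \/ x.2 = 0 \/ x.1 = x.2)]].
Proof.
move=> hr Hd Hinv Mu.
set M := infoM rho pts w.
set A := invmx M.
pose a := fun i j => A i j.
have Ha : forall i j, a (sg i) (sg j) = a i j.
  by apply: invmx_inv => //; exact: (@infoM_inv R rho n pts w Hd Hinv).
have psdA : forall y0 y1 y2 y3, 0 <= bq a y0 y1 y2 y3 y0 y1 y2 y3.
  move=> y0 y1 y2 y3.
  pose z : 'cV[R]_4 := \col_(i < 4) [:: y0; y1; y2; y3]`_i.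
  have := invmx_psd _ Mu (@infoM_psd R rho n pts w Hd) z.
  by rewrite bq_mx !mxE.
case: sgE => s0 s1 s2 s3.
have e1 : a o0 o2 = a o0 o1 by have := Ha o0 o1; rewrite ?s0 ?s1 ?s2 ?s3.
have e2 : a o2 o0 = a o1 o0 by have := Ha o1 o0; rewrite ?s0 ?s1 ?s2 ?s3.
have e3 : a o2 o2 = a o1 o1 by have := Ha o1 o1; rewrite ?s0 ?s1 ?s2 ?s3.
have e4 : a o2 o1 = a o1 o2 by have := Ha o1 o2; rewrite ?s0 ?s1 ?s2 ?s3.
have e5 : a o2 o3 = a o1 o3 by have := Ha o1 o3; rewrite ?s0 ?s1 ?s2 ?s3.
have e6 : a o3 o2 = a o3 o1 by have := Ha o3 o1; rewrite ?s0 ?s1 ?s2 ?s3.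
have key : forall x, Xset x -> exists P, 
   (Xset P /\ (P.1 = 0 \/ P.2 = 0 \/ P.1 = P.2)) /\
   sens rho pts w x <= sens rho pts w P.
  move=> [x1 x2] [/= h1 h2].
  set E := x1 + x2 + rho * (x1 * x2).
  have E0 : 0 <= E by rewrite /E; apply: addr_ge0; [exact: addr_ge0 | 
     by apply: mulr_ge0 => //; exact: mulr_ge0].
  have Er : 0 <= 1 + rho * E by apply: addr_ge0 => //; exact: mulr_ge0.
  set r := Num.sqrt (1 + rho * E).
  have r0 : 0 <= r by exact: sqrtr_ge0.
  have r2 : r ^+ 2 = 1 + rho * E by rewrite sqr_sqrtr.
  have r1 : 1 + r != 0 by rewrite gt_eqF // ltr_pwDl.
  set u := E / (1 + r).
  have hu : 0 <= u by apply: divr_ge0 => //; exact: addr_ge0.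
  have hE : 2 * u + rho * u ^+ 2 = E.
    have H : 2 * u + rho * u ^+ 2 - E = E * (1 + rho * E - r ^+ 2) / (1 + r) ^+ 2.
      by rewrite /u; field.
    move: H; rewrite r2 subrr mulr0 mul0r => /eqP; rewrite subr_eq0 => /eqP.
    done.
  have C := core _ _ _ _ _ e1 e2 e3 e4 e5 e6 psdA hr h1 h2 hu hE.
  have L1 : lam rho (E, 0) = lam rho (x1, x2) by rewrite /lam /=; congr expR; rewrite /E; ring.
  have L2 : lam rho (u, u) = lam rho (x1, x2).
    rewrite /lam /=; congr expR.
    have -> : - x1 - x2 - rho * (x1 * x2) = - E by rewrite /E; ring.
    by rewrite -hE; ring.
  have SE : forall y : R * R, sens rho pts w y =
      bq a 1 y.1 y.2 (y.1 * y.2) 1 y.1 y.2 (y.1 * y.2) / 4%:R - (lam rho y)^-1.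
    by move=> y; rewrite /sens QE.
  move: C; rewrite le_max => /orP [H|H].
  - exists (E, 0); split; first by split; [split => //= | right; left].
    rewrite !SE L1 /=; lra.
  - exists (u, u); split; first by split; [split => //= | right; right].
    rewrite !SE L2 /=; lra.
apply/eqP; rewrite eq_le; apply/andP; split.
- apply: ub_ereal_sup => _ [x Xx <-].
  have [P [SP HP]] := key x Xx.
  apply: (@le_trans _ _ (sens rho pts w P)%:E); first by rewrite lee_fin.
  by apply: ereal_sup_ubound; exists P.
- by apply: le_ereal_sup => _ [x [Xx _] <-]; exists x.
Qed.
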